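(* Let $g:\mathbb{R}^m\to\overline{\mathbb{R}}$ be a polyhedral function and $(\bar z,\bar\lambda)\in\mathrm{gph}\,\partial g$. The following are equivalent: (a) there is a neighborhood $O$ of $(\bar z,\bar\lambda)$ such that for every $(z,\lambda)\in O\cap\mathrm{gph}\,\partial g$, $g$ is strictly twice epi-differentiable at $z$ for $\lambda$; (b) $\bar\lambda\in\mathrm{ri}\,\partial g(\bar z)$.
   Context: A proper function $g:\mathbb{R}^m\to\overline{\mathbb{R}}$ is polyhedral if its epigraph is a polyhedral convex set; $\partial g$ is the convex-analysis subdifferential; $\mathrm{ri}$ is relative interior. For $f:\mathbb{R}^n\to\overline{\mathbb{R}}$, $f(x)$ finite, $v\in\partial f(x)$, $t>0$, set $\Delta_t^2 f(x,v)(w)=\frac{f(x+tw)-f(x)-t\langle v,w\rangle}{\frac12 t^2}$. A family of functions epi-converges to a function if their epigraphs converge to its epigraph in the Painlevé–Kuratowski sense. $f$ is strictly twice epi-differentiable at $\bar x$ for $\bar v\in\partial f(\bar x)$ if the functions $\Delta_t^2 f(x,v)$ epi-converge to some function as $t\searrow 0$ and $(x,v)\to(\bar x,\bar v)$ with $(x,v)\in\mathrm{gph}\,\partial f$ and $f(x)\to f(\bar x)$. *)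

(* Defs.v *)
From HB Require Import structures.
From mathcomp Require Import all_boot all_order all_algebra.
From mathcomp Require Import all_classical all_reals all_analysis.
Set Implicit Arguments. Unset Strict Implicit. Unset Printing Implicit Defensive.
Import Order.TTheory GRing.Theory Num.Theory.
Import numFieldNormedType.Exports.
Local Open Scope classical_set_scope.
Local Open Scope ring_scope.

Section Defs.
Variable R : realType.

Definition dotv (n : nat) (x y : 'rV[R]_n) : R := \sum_(i < n) x ord0 i * y ord0 i.

Definition epi (n : nat) (f : 'rV[R]_n -> \bar R) : set ('rV[R]_n * R) :=
  [set p | (f p.1 <= p.2%:E)%E].

Definition proper_fun (n : nat) (f : 'rV[R]_n -> \bar R) : Prop :=
  (forall x, f x <> -oo%E) /\ (exists x, f x \is a fin_num).

Definition polyhedral_set (n : nat) (C : set ('rV[R]_n * R)) : Prop :=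
  exists (k : nat) (a : 'I_k -> 'rV[R]_n) (b c : 'I_k -> R),
    C = [set p | forall i, dotv (a i) p.1 + b i * p.2 <= c i].

Definition polyhedral (n : nat) (f : 'rV[R]_n -> \bar R) : Prop :=
  proper_fun f /\ polyhedral_set (epi f).

Definition subdiff (n : nat) (f : 'rV[R]_n -> \bar R) (x : 'rV[R]_n) : set 'rV[R]_n :=
  [set v | f x \is a fin_num /\ forall y, (f x + (dotv v (y - x)%R)%:E <= f y)%E].

Definition aff_hull (n : nat) (C : set 'rV[R]_n) : set 'rV[R]_n :=
  [set w | exists (k : nat) (p : 'I_k -> 'rV[R]_n) (c : 'I_k -> R),
      (forall i, C (p i)) /\ \sum_(i < k) c i = 1 /\ w = \sum_(i < k) c i *: p i].

Definition rel_int (n : nat) (C : set 'rV[R]_n) : set 'rV[R]_n :=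
  [set v | C v /\ \forall w \near v, aff_hull C w -> C w].

Definition sodq (n : nat) (f : 'rV[R]_n -> \bar R) (x v : 'rV[R]_n) (t : R)
    (w : 'rV[R]_n) : \bar R :=
  ((f (x + t *: w)%R - f x - (t * dotv v w)%R%:E) * (2 / t ^+ 2)%R%:E)%E.

Definition PK_cvg (T : topologicalType) (C : nat -> set T) (D : set T) : Prop :=
  (forall y, D y -> exists yk : nat -> T,
       (\forall k \near \oo, C k (yk k)) /\ yk @ \oo --> y) /\
  (forall (y : T) (s : nat -> nat) (yk : nat -> T),
       (forall k, (s k < s k.+1)%N) -> (forall k, C (s k) (yk k)) ->
       yk @ \oo --> y -> D y).

Definition epi_cvg (n : nat) (fk : nat -> 'rV[R]_n -> \bar R) (phi : 'rV[R]_n -> \bar R) :=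
  PK_cvg (fun k => epi (fk k)) (epi phi).

Definition strictly_twice_epi_diff (n : nat) (f : 'rV[R]_n -> \bar R)
    (xbar vbar : 'rV[R]_n) : Prop :=
  subdiff f xbar vbar /\
  exists phi : 'rV[R]_n -> \bar R,
    forall (t : nat -> R) (x v : nat -> 'rV[R]_n),
      (forall k, 0 < t k) -> t @ \oo --> (0 : R) ->
      x @ \oo --> xbar -> v @ \oo --> vbar ->
      (forall k, subdiff f (x k) (v k)) ->
      (fun k => f (x k)) @ \oo --> f xbar ->
      epi_cvg (fun k => sodq f (x k) (v k) (t k)) phi.

End Defs.

(* Main.v *)
Require Import Defs.
From HB Require Import structures.
From mathcomp Require Import all_boot all_order all_algebra.
From mathcomp Require Import all_classical all_reals all_analysis.
From mathcomp Require Import ring lra.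
Import Order.TTheory GRing.Theory Num.Theory.
Import numFieldNormedType.Exports.
Local Open Scope classical_set_scope.
Local Open Scope ring_scope.
Set Implicit Arguments. Unset Strict Implicit. Unset Printing Implicit Defensive.

Section DotV.
Variables (R : realType) (m : nat).
Implicit Types (x y z : 'rV[R]_m).

Lemma dotvC x y : dotv x y = dotv y x.
Proof. by apply: eq_bigr => i _; rewrite mulrC. Qed.

Lemma dotvDl x y z : dotv (x + y) z = dotv x z + dotv y z.
Proof. by rewrite /dotv -big_split; apply: eq_bigr => i _; rewrite !mxE mulrDl. Qed.

Lemma dotvZl a x y : dotv (a *: x) y = a * dotv x y.
Proof. by rewrite /dotv mulr_sumr; apply: eq_bigr => i _; rewrite !mxE mulrA. Qed.

Lemma dotvNl x y : dotv (- x) y = - dotv x y.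
Proof. by rewrite -scaleN1r dotvZl mulN1r. Qed.

Lemma dotvBl x y z : dotv (x - y) z = dotv x z - dotv y z.
Proof. by rewrite dotvDl dotvNl. Qed.

Lemma dotv0l y : dotv 0 y = 0.
Proof. by rewrite /dotv big1 // => i _; rewrite mxE mul0r. Qed.

Lemma dotvDr x y z : dotv x (y + z) = dotv x y + dotv x z.
Proof. by rewrite dotvC dotvDl !(dotvC x). Qed.

Lemma dotvZr a x y : dotv x (a *: y) = a * dotv x y.
Proof. by rewrite dotvC dotvZl dotvC. Qed.

Lemma dotvNr x y : dotv x (- y) = - dotv x y.
Proof. by rewrite dotvC dotvNl dotvC. Qed.

Lemma dotvBr x y z : dotv x (y - z) = dotv x y - dotv x z.
Proof. by rewrite dotvDr dotvNr. Qed.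

Lemma dotv0r x : dotv x 0 = 0.
Proof. by rewrite dotvC dotv0l. Qed.

Lemma coord_le_norm x i : `|x ord0 i| <= `|x|.
Proof.
change (`|x ord0 i| <= mx_norm x); rewrite mx_normrE.
exact: (le_bigmax _ (fun ij : 'I_1 * 'I_m => `|x ij.1 ij.2|) (ord0, i)).
Qed.

Lemma dotv_norm x y : `|dotv x y| <= m%:R * `|x| * `|y|.
Proof.
rewrite /dotv; apply: (le_trans (ler_norm_sum _ _ _)).
rewrite -mulrA -[m in m%:R]card_ord -sumr_const.
rewrite mulr_suml; apply: ler_sum => i _; rewrite mul1r normrM.
by apply: ler_pM => //; apply: coord_le_norm.
Qed.

Lemma dotv_self_gt0 x : x != 0 -> 0 < dotv x x.
Proof.
move=> x0.
have [i xi0] : exists i, x ord0 i != 0.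
  apply/existsP; move: x0; apply: contraR; rewrite negb_exists => /forallP H.
  apply/eqP/matrixP => a b; rewrite mxE (ord1 a); exact/eqP/negPn/H.
rewrite /dotv (bigD1 i) //=; apply: ltr_pwDl.
  by rewrite lt_def mulf_neq0 //= -expr2 sqr_ge0.
by apply: sumr_ge0 => j _; rewrite -expr2 sqr_ge0.
Qed.

End DotV.

Section Farkas.
Variables (R : realType) (m : nat).
Implicit Types (x y z c a e u : 'rV[R]_m) (s : seq 'rV[R]_m).

Lemma in_tl (T : eqType) (x e : T) (l : seq T) : x \in l -> x \in e :: l.
Proof. by move=> h; rewrite in_cons h orbT. Qed.

Ltac vec := apply/rowP => ?; rewrite !mxE; ring.

Fixpoint cone_mem s c : Prop :=
  match s with
  | [::] => c = 0
  | a :: s' => exists mu : R, 0 <= mu /\ cone_mem s' (c - mu *: a)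
  end.

Fixpoint span_mem s c : Prop :=
  match s with
  | [::] => c = 0
  | a :: s' => exists y : R, span_mem s' (c - y *: a)
  end.

Lemma cone_proj a u s c : 0 < dotv a u ->
  (forall e, e \in s -> dotv e u <= 0) ->
  cone_mem [seq x - (dotv x u / dotv a u) *: a | x <- s] c ->
  exists nu, 0 <= nu /\ cone_mem s (c - nu *: a).
Proof.
move=> au; elim: s c => [|e s IH] c Hs /=.
  by move=> ->; exists 0; split => //; vec.
move=> [mu [mu0 Hm]].
have [nu0 [nu00 Hn]] := IH _ (fun x xs => Hs x (in_tl _ xs)) Hm.
exists (nu0 - mu * (dotv e u / dotv a u)); split.
  have h1 : dotv e u / dotv a u <= 0.
    by rewrite mulr_le0_ge0 ?invr_ge0 ?(ltW au) // Hs // mem_head.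
  have h2 : mu * (dotv e u / dotv a u) <= 0 by rewrite mulr_ge0_le0.
  by rewrite subr_ge0 (le_trans h2).
exists mu; split => //.
suff -> : c - (nu0 - mu * (dotv e u / dotv a u)) *: a - mu *: e =
          c - mu *: (e - (dotv e u / dotv a u) *: a) - nu0 *: a by [].
vec.
Qed.

Lemma farkas_n n : forall s c, size s = n ->
  cone_mem s c \/ exists u, (forall e, e \in s -> dotv e u <= 0) /\ 0 < dotv c u.
Proof.
elim: n => [|n IH] [|a s] c //= Hs.
  have [->|c0] := eqVneq c 0; first by left.
  by right; exists c; split => //; apply: dotv_self_gt0.
case: Hs => Hs.
have [H|[u [Hu Hcu]]] := IH s c Hs.
  by left; exists 0; split => //; rewrite scale0r subr0.
have [au|au] := leP (dotv a u) 0.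
  right; exists u; split => // e; rewrite in_cons => /orP[/eqP->//|]; exact: Hu.
pose proj x := x - (dotv x u / dotv a u) *: a.
have := IH [seq proj x | x <- s] (proj c); rewrite size_map => /(_ Hs).
case=> [Hp|[u' [Hu' Hcu']]].
  have [nu [nu0 Hn]] := cone_proj au Hu Hp.
  left; exists (dotv c u / dotv a u + nu); split.
    by rewrite addr_ge0 // divr_ge0 // ltW.
  suff -> : c - (dotv c u / dotv a u + nu) *: a = proj c - nu *: a by [].
  rewrite /proj; vec.
have key x : dotv x (u' - (dotv a u' / dotv a u) *: u) = dotv (proj x) u'.
  rewrite /proj dotvBr dotvZr dotvBl dotvZl (dotvC a u'); ring.
right; exists (u' - (dotv a u' / dotv a u) *: u); split; last by rewrite key.
move=> e; rewrite in_cons => /orP[/eqP->|es].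
  rewrite dotvBr dotvZr mulfVK ?subrr //.
  by rewrite gt_eqF.
by rewrite key; apply: Hu'; apply: map_f.
Qed.

Lemma farkas s c :
  cone_mem s c \/ exists u, (forall e, e \in s -> dotv e u <= 0) /\ 0 < dotv c u.
Proof. exact: farkas_n. Qed.

Lemma cone_bound s c : cone_mem s c -> exists M, 0 <= M /\
  forall u (Y : R), 0 <= Y -> (forall e, e \in s -> dotv e u <= Y) -> dotv c u <= M * Y.
Proof.
elim: s c => [|a s IH] c /=.
  by move=> ->; exists 0; split => // u Y _ _; rewrite dotv0l mul0r.
move=> [mu [mu0 Hm]]; have [M [M0 HM]] := IH _ Hm.
exists (M + mu); split; first by rewrite addr_ge0.
move=> u Y Y0 He.
have := HM u Y Y0 (fun e es => He e (in_tl _ es)).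
rewrite dotvBl dotvZl => h.
have ha := He a (mem_head _ _).
have h2 : mu * dotv a u <= mu * Y by rewrite ler_wpM2l.
rewrite mulrDl; lra.
Qed.

Lemma span0 s : span_mem s 0.
Proof. by elim: s => [|a s IH] //=; exists 0; rewrite scale0r subr0. Qed.

Lemma spanD s c1 c2 : span_mem s c1 -> span_mem s c2 -> span_mem s (c1 + c2).
Proof.
elim: s c1 c2 => [|a s IH] c1 c2 /=; first by move=> -> ->; rewrite addr0.
move=> [y1 h1] [y2 h2]; exists (y1 + y2).
suff -> : c1 + c2 - (y1 + y2) *: a = (c1 - y1 *: a) + (c2 - y2 *: a) by apply: IH.
vec.
Qed.

Lemma spanZ s k c : span_mem s c -> span_mem s (k *: c).
Proof.
elim: s c => [|a s IH] c /=; first by move=> ->; rewrite scaler0.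
move=> [y h]; exists (k * y).
suff -> : k *: c - (k * y) *: a = k *: (c - y *: a) by apply: IH.
vec.
Qed.

Lemma cone_span s c : cone_mem s c -> span_mem s c.
Proof.
elim: s c => [|a s IH] c //= [mu [_ h]]; exists mu; exact: IH.
Qed.

Lemma cone_opp_span s c : cone_mem [seq - x | x <- s] c -> span_mem s c.
Proof.
elim: s c => [|a s IH] c //= [mu [_ h]]; exists (- mu).
suff -> : c - (- mu) *: a = c - mu *: (- a) by apply: IH.
vec.
Qed.

Lemma cone_cat s1 s2 c : cone_mem (s1 ++ s2) c ->
  exists c1, cone_mem s1 c1 /\ cone_mem s2 (c - c1).
Proof.
elim: s1 c => [|a s1 IH] c /=.
  by move=> h; exists 0; split => //; rewrite subr0.
move=> [mu [mu0 h]]; have [c1 [h1 h2]] := IH _ h.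
exists (mu *: a + c1); split.
  exists mu; split => //.
  suff -> : mu *: a + c1 - mu *: a = c1 by [].
  vec.
suff -> : c - (mu *: a + c1) = c - mu *: a - c1 by [].
vec.
Qed.

Lemma cone_pm_span s c : cone_mem (s ++ [seq - x | x <- s]) c -> span_mem s c.
Proof.
move=> /cone_cat [c1 [h1 h2]].
suff -> : c = c1 + (c - c1) by apply: spanD; [apply: cone_span|apply: cone_opp_span].
vec.
Qed.

Lemma span_perp s c u : span_mem s c -> (forall e, e \in s -> dotv e u = 0) ->
  dotv c u = 0.
Proof.
elim: s c => [|a s IH] c /=; first by move=> ->; rewrite dotv0l.
move=> [y h] He.
have := IH _ h (fun e es => He e (in_tl _ es)).
rewrite dotvBl dotvZl (He a (mem_head _ _)) mulr0 subr0; done.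
Qed.

Lemma span_dot_bound s : exists k, 0 <= k /\ forall c u (B : R), span_mem s c ->
  (forall e, e \in s -> `|dotv e u| <= B) -> dotv c u <= k * `|c| * B.
Proof.
elim: s => [|a s [k0 [k00 IH]]].
  exists 0; split => // c u B /= -> _; rewrite dotv0l normr0 !mulr0 mul0r; done.
have [Ha|[u0 [Hu0 Hau0]]] := farkas (s ++ [seq - x | x <- s]) a.
  have Hsa := cone_pm_span Ha.
  exists k0; split => // c u B [y h] HB.
  have hc : span_mem s c.
    suff -> : c = (c - y *: a) + y *: a by apply: spanD => //; apply: spanZ.
    vec.
  by apply: IH => // e es; apply: HB; rewrite in_cons es orbT.
have perp e : e \in s -> dotv e u0 = 0.
  move=> es; apply/eqP; rewrite eq_le Hu0 ?mem_cat ?es //=.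
  have := Hu0 (- e); rewrite mem_cat map_f ?orbT // => /(_ isT).
  by rewrite dotvNl oppr_le0.
pose k1 := m%:R * `|u0| / dotv a u0.
have k10 : 0 <= k1 by rewrite /k1 divr_ge0 ?mulr_ge0 // ltW.
exists (k1 + k0 * (1 + k1 * `|a|)); split.
  by rewrite addr_ge0 // mulr_ge0 // addr_ge0 // mulr_ge0.
move=> c u B [y h] HB.
have hB : 0 <= B by apply: le_trans (HB a (mem_head _ _)).
have hp : dotv (c - y *: a) u0 = 0 by apply: span_perp h perp.
have yeq : y * dotv a u0 = dotv c u0.
  by move: hp; rewrite dotvBl dotvZl => /eqP; rewrite subr_eq0 => /eqP ->.
have hy : `|y| <= k1 * `|c|.
  rewrite /k1 mulrAC ler_pdivlMr // -(gtr0_norm Hau0) -normrM yeq.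
  by rewrite mulrAC; apply: dotv_norm.
have hr : `|c - y *: a| <= (1 + k1 * `|a|) * `|c|.
  apply: (le_trans (ler_normB _ _)); rewrite normrZ.
  have : `|y| * `|a| <= k1 * `|c| * `|a| by rewrite ler_wpM2r.
  rewrite mulrDl mul1r mulrAC; lra.
have h1 : y * dotv a u <= k1 * `|c| * B.
  apply: (le_trans (ler_norm _)); rewrite normrM.
  apply: ler_pM => //; exact: HB (mem_head _ _).
have h2 : k0 * `|c - y *: a| * B <= k0 * ((1 + k1 * `|a|) * `|c|) * B.
  by apply: ler_wpM2r => //; apply: ler_wpM2l.
have h3 : dotv (c - y *: a) u <= k0 * `|c - y *: a| * B.
  by apply: IH => // e es; apply: HB; rewrite in_cons es orbT.
have -> : dotv c u = dotv (c - y *: a) u + y * dotv a u.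
  by rewrite dotvBl dotvZl subrK.
have -> : (k1 + k0 * (1 + k1 * `|a|)) * `|c| * B =
   k1 * `|c| * B + k0 * ((1 + k1 * `|a|) * `|c|) * B by ring.
lra.
Qed.

End Farkas.


Section Topo.
Variables (R : realType) (m : nat).

Lemma pl_cvg_seq_fst (T U : topologicalType) (y : nat -> T * U) (l : T * U) :
  y @ \oo --> l -> (fun k => (y k).1) @ \oo --> l.1.
Proof. move=> h; apply: cvg_comp h _; exact: cvg_fst. Qed.

Lemma pl_cvg_seq_snd (T U : topologicalType) (y : nat -> T * U) (l : T * U) :
  y @ \oo --> l -> (fun k => (y k).2) @ \oo --> l.2.
Proof. move=> h; apply: cvg_comp h _; exact: cvg_snd. Qed.

Lemma pl_cvg_subseq (T : topologicalType) (u : nat -> T) (l : T) (s : nat -> nat) :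
  (forall k, (s k < s k.+1)%N) -> u @ \oo --> l -> (fun k => u (s k)) @ \oo --> l.
Proof.
move=> hs hu.
have sk k : (k <= s k)%N.
  elim: k => [//|k IH]; exact: (leq_ltn_trans IH (hs k)).
apply: cvg_comp hu => P [N _ HN]; exists N => // k /= hk.
by apply: HN; apply: leq_trans hk (sk k).
Qed.

Lemma pl_dotv_cvg (x y : nat -> 'rV[R]_m) (lx ly : 'rV[R]_m) :
  x @ \oo --> lx -> y @ \oo --> ly ->
  (fun k => dotv (x k) (y k)) @ \oo --> dotv lx ly.
Proof.
move=> hx hy; rewrite /dotv.
apply: (@cvg_big _ _ +%R 0 xpredT _ _ _ _ (fun i k => x k ord0 i * y k ord0 i)).
- exact: add_continuous.
- move=> i _; apply: cvgM.
  + have := cvg_comp _ _ hx (@coord_continuous R 1 m ord0 i lx); exact.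
  + have := cvg_comp _ _ hy (@coord_continuous R 1 m ord0 i ly); exact.
Qed.

Lemma pl_lim_ge0 (u : nat -> R) l : (\forall k \near \oo, 0 <= u k) ->
  u @ \oo --> l -> 0 <= l.
Proof. by move=> h hu; have := @closed_cvg nat R^o \oo _ u [set x : R | 0 <= x] (@closed_ge R 0) h l hu; exact. Qed.

Lemma pl_lim_le0 (u : nat -> R) l : (\forall k \near \oo, u k <= 0) ->
  u @ \oo --> l -> l <= 0.
Proof. by move=> h hu; have := @closed_cvg nat R^o \oo _ u [set x : R | x <= 0] (@closed_le R 0) h l hu; exact. Qed.

Lemma pl_harm_gt0 k : 0 < (harmonic k : R).
Proof. exact: harmonic_gt0. Qed.

Lemma pl_harm_le1 k : (harmonic k : R) <= 1.
Proof. by rewrite /harmonic /= invf_le1 // ler1n. Qed.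

Lemma pl_aff2 (S : set 'rV[R]_m) p1 p2 (al : R) : S p1 -> S p2 ->
  aff_hull S (al *: p1 + (1 - al) *: p2).
Proof.
move=> h1 h2.
exists 2%N, (fun i : 'I_2 => if val i == 0%N then p1 else p2),
  (fun i : 'I_2 => if val i == 0%N then al else 1 - al); split.
  by move=> i; case: ifP.
split; first by rewrite big_ord_recr big_ord_recr big_ord0 /=; ring.
by rewrite big_ord_recr big_ord_recr big_ord0 /= add0r.
Qed.

Lemma pl_near_ball (u : nat -> 'rV[R]_m) (l c : 'rV[R]_m) (d : R) :
  u @ \oo --> l -> `|l - c| < d -> \forall n \near \oo, `|u n - c| < d.
Proof.
move=> hu hl.
have e0 : 0 < d - `|l - c| by rewrite subr_gt0.
move/cvgrPdist_lt: hu => /(_ _ e0); apply: filterS => n hn.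
have -> : u n - c = (u n - l) + (l - c) by rewrite addrA subrK.
apply: (le_lt_trans (ler_normD _ _)); rewrite distrC in hn; lra.
Qed.

Lemma pl_near_small (u : nat -> R) (e : R) : u @ \oo --> 0 -> 0 < e ->
  \forall n \near \oo, `|u n| < e.
Proof.
move=> hu e0; move/cvgrPdist_lt: hu => /(_ _ e0); apply: filterS => n.
by rewrite sub0r normrN.
Qed.

End Topo.


Lemma small_step (R : realType) (m : nat) (rho : R) (u w : 'rV[R]_m) (s tau : R) :
  `|u| < rho -> `|s| < rho -> exists t, 0 < t /\ `|u + t *: w| < rho /\ `|s + t * tau| < rho.
Proof.
move=> hu hs.
pose d := Num.min (rho - `|u|) (rho - `|s|).
have d0 : 0 < d by rewrite lt_min !subr_gt0 hu hs.
pose t := d / (`|w| + `|tau| + 1).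
have den : 0 < `|w| + `|tau| + 1 by rewrite ltr_pwDr // addr_ge0.
have t0 : 0 < t by rewrite divr_gt0.
have tw : t * (`|w| + `|tau|) < d.
  rewrite /t mulrAC ltr_pdivrMr // ltr_pM2l //; lra.
have hw : t * `|w| <= t * (`|w| + `|tau|).
  by apply: ler_wpM2l; [exact: ltW | rewrite lerDl].
have ht : t * `|tau| <= t * (`|w| + `|tau|).
  by apply: ler_wpM2l; [exact: ltW | rewrite lerDr].
have d1 : d <= rho - `|u| by rewrite ge_min lexx.
have d2 : d <= rho - `|s| by rewrite ge_min lexx orbT.
exists t; split => //; split.
  apply: (le_lt_trans (ler_normD _ _)); rewrite normrZ gtr0_norm //; lra.
apply: (le_lt_trans (ler_normD _ _)); rewrite normrM gtr0_norm //; lra.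
Qed.

Lemma subdiffE (R : realType) (m : nat) (f : 'rV[R]_m -> \bar R) x v :
  subdiff f x v -> exists gx : R, f x = gx%:E /\
    forall y, ((gx + dotv v (y - x))%R%:E <= f y)%E.
Proof.
move=> [fx H]; exists (fine (f x)); split; first by rewrite fineK.
by move=> y; have := H y; rewrite -{1}(fineK fx).
Qed.

Lemma sodq_le (R : realType) (m : nat) (f : 'rV[R]_m -> \bar R) x v t w gx (al : R) :
  f x = gx%:E -> 0 < t ->
  (sodq f x v t w <= al%:E)%E <->
  (f (x + t *: w)%R <= (gx + t * dotv v w + al * t ^+ 2 / 2)%R%:E)%E.
Proof.
move=> fx t0; rewrite /sodq fx.
have q0 : 0 < 2 / t ^+ 2 by rewrite divr_gt0 // exprn_gt0.
case: (f (x + t *: w)) => [r| |] /=.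
- rewrite -!EFinB -EFinM !lee_fin.
  rewrite -ler_pdivlMr //.
  have -> : al / (2 / t ^+ 2) = al * t ^+ 2 / 2.
    by field; rewrite gt_eqF // exprn_gt0.
  split; lra.
- by rewrite gt0_mulye ?lte_fin //; split => //.
- by rewrite gt0_mulNye ?lte_fin //; split => // _; rewrite leNye.
Qed.

Section Local.
Variables (R : realType) (m : nat) (g : 'rV[R]_m -> \bar R).
Variables (k : nat) (a : 'I_k -> 'rV[R]_m) (b c : 'I_k -> R).
Hypothesis HQ : forall x (al : R), (g x <= al%:E)%E <->
  (forall i, dotv (a i) x + b i * al <= c i).
Hypothesis Hnm : forall x, g x <> -oo%E.
Variables (zb : 'rV[R]_m) (gam : R).
Hypothesis Hgz : g zb = gam%:E.

Definition act i := dotv (a i) zb + b i * gam == c i.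
Definition EE u (s : R) := forall i, act i -> dotv (a i) u + b i * s <= 0.

Lemma G1 u s : (g (zb + u) <= (gam + s)%:E)%E -> EE u s.
Proof.
move=> /HQ H i /eqP ai; have := H i.
rewrite dotvDr mulrDr -ai; lra.
Qed.

Lemma slack_ge0 i : 0 <= c i - dotv (a i) zb - b i * gam.
Proof.
have : (g zb <= gam%:E)%E by rewrite Hgz.
move=> /HQ /(_ i); lra.
Qed.

Lemma G2 : exists rho, 0 < rho /\ forall u s, `|u| < rho -> `|s| < rho -> EE u s ->
  (g (zb + u) <= (gam + s)%:E)%E.
Proof.
pose sl i := c i - dotv (a i) zb - b i * gam.
pose N i := if act i then 0 else (m%:R * `|a i| + `|b i| + 1) / sl i.
have N0 i : 0 <= N i.
  rewrite /N; case: ifP => // _; apply: divr_ge0; last exact: slack_ge0.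
  by rewrite addr_ge0 // addr_ge0 // mulr_ge0.
have S0 : 0 <= \sum_i N i by apply: sumr_ge0 => i _.
exists (1 / (1 + \sum_i N i)); split; first by rewrite divr_gt0 // ltr_pwDl.
move=> u s hu hs hE; apply/HQ => i.
case: (boolP (act i)) => ai.
  have := hE i ai; move/eqP: ai; rewrite dotvDr mulrDr; lra.
have slp : 0 < sl i.
  rewrite lt_def slack_ge0 andbT; apply: contra ai.
  by rewrite /act /sl subr_eq0 subr_eq addrC => /eqP <-.
have hN : N i <= \sum_i N i.
  by rewrite (bigD1 i) //= lerDl sumr_ge0.
set rho := 1 / (1 + \sum_i N i) in hu hs.
have rho0 : 0 < rho by rewrite divr_gt0 // ltr_pwDl.
have hrN : rho * N i < 1.
  rewrite /rho mul1r ltr_pdivrMl ?ltr_pwDl // mulr1.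
  by apply: (le_lt_trans hN); rewrite ltrDr.
have hk : rho * (m%:R * `|a i| + `|b i| + 1) < sl i.
  move: hrN; rewrite /N (negbTE ai) mulrA ltr_pdivrMr //; lra.
have h1 : dotv (a i) u <= m%:R * `|a i| * rho.
  apply: (le_trans (ler_norm _)); apply: (le_trans (dotv_norm _ _)).
  by apply: ler_wpM2l; [rewrite mulr_ge0|apply: ltW].
have h2 : b i * s <= `|b i| * rho.
  apply: (le_trans (ler_norm _)); rewrite normrM.
  by apply: ler_wpM2l => //; apply: ltW.
have e : rho * (m%:R * `|a i| + `|b i| + 1) =
  m%:R * `|a i| * rho + `|b i| * rho + rho by ring.
move: hk; rewrite e /sl dotvDr mulrDr; lra.
Qed.

Lemma EE_add u s u' s' : EE u s -> EE u' s' -> EE (u + u') (s + s').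
Proof. move=> h h' i ai; have := h i ai; have := h' i ai; rewrite dotvDr; lra. Qed.

Lemma EE_scale t u s : 0 <= t -> EE u s -> EE (t *: u) (t * s).
Proof.
move=> t0 h i ai; have := h i ai => hi.
rewrite dotvZr mulrCA -mulrDr; exact: mulr_ge0_le0.
Qed.

Lemma EE_unscale t u s : 0 < t -> EE (t *: u) (t * s) -> EE u s.
Proof.
move=> t0 h; have ti : 0 <= t^-1 by rewrite invr_ge0 ltW.
have := EE_scale ti h.
by rewrite scalerA mulrA mulVf ?gt_eqF // scale1r mul1r.
Qed.

Lemma C_iff v : subdiff g zb v <-> forall u s, EE u s -> dotv v u <= s.
Proof.
split.
  move=> /subdiffE [gx [hx Hv]] u s hE.
  move: hx; rewrite Hgz => -[hgx]; rewrite -hgx in Hv.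
  have [rho [rho0 HG]] := G2.
  have h0u : `|(0:'rV[R]_m)| < rho by rewrite normr0.
  have h0s : `|(0:R)| < rho by rewrite normr0.
  have [t [t0 [h1 h2]]] := @small_step R m rho 0 u 0 s h0u h0s.
  rewrite !add0r in h1 h2.
  have := HG _ _ h1 h2 (EE_scale (ltW t0) hE).
  have := Hv (zb + t *: u); rewrite addrAC subrr add0r dotvZr => h3 h4.
  have := le_trans h3 h4; rewrite lee_fin lerD2l ler_pM2l //.
move=> H; split; first by rewrite Hgz.
move=> y; case E: (g y) => [r| |]; last by case: (Hnm E).
  have : (g (zb + (y - zb)) <= (gam + (r - gam))%:E)%E.
    by rewrite [zb + _]addrC subrK [gam + _]addrC subrK E.
  move=> /G1 /H; rewrite Hgz lee_fin; lra.
by rewrite leey.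
Qed.

Lemma b_act_le0 i : act i -> b i <= 0.
Proof.
move=> ai; have : (g (zb + 0) <= (gam + 1)%:E)%E by rewrite addr0 Hgz lee_fin lerDl.
move=> /G1 /(_ i ai); rewrite dotv0r mulr1 add0r; done.
Qed.

Lemma C_convex lb q t : subdiff g zb lb -> subdiff g zb (lb + q) -> 0 <= t <= 1 ->
  subdiff g zb (lb + t *: q).
Proof.
move=> /C_iff h1 /C_iff h2 /andP[t0 t1]; apply/C_iff => u s hE.
have := h1 u s hE; have := h2 u s hE; rewrite !dotvDl dotvZl => e2 e1.
have : t * dotv q u <= t * (s - dotv lb u) by rewrite ler_wpM2l //; lra.
have : t * (s - dotv lb u) <= s - dotv lb u.
  by rewrite ler_piMl // subr_ge0.
lra.
Qed.

Definition ee (lb : 'rV[R]_m) i := a i + b i *: lb.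
Definition qq (lb : 'rV[R]_m) i := if b i < 0 then (- b i)^-1 *: ee lb i else ee lb i.

Lemma eeE lb i w : dotv (ee lb i) w = dotv (a i) w + b i * dotv lb w.
Proof. by rewrite /ee dotvDl dotvZl. Qed.

Lemma K0E lb w : EE w (dotv lb w) <-> forall i, act i -> dotv (ee lb i) w <= 0.
Proof. by split => h i ai; have := h i ai; rewrite eeE. Qed.

Lemma q_in_C lb i : subdiff g zb lb -> act i -> subdiff g zb (lb + qq lb i).
Proof.
move=> /C_iff hl ai; apply/C_iff => u s hE.
have s0 := hl u s hE.
have hi := hE i ai.
have bi := b_act_le0 ai.
rewrite dotvDl /qq; case: ifP => bn.
  rewrite dotvZl eeE.
  have nb : 0 < - b i by rewrite oppr_gt0.
  rewrite -[X in _ <= X](subrK (dotv lb u)) [X in _ <= X]addrC lerD2l.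
  rewrite mulrC ler_pdivrMr //.
  have -> : (s - dotv lb u) * - b i = - (b i * s) + b i * dotv lb u by ring.
  lra.
have b0 : b i = 0 by apply/eqP; rewrite eq_le bi /= leNgt bn.
move: hi; rewrite eeE b0 !mul0r addr0; lra.
Qed.

Definition FLAT lb := forall q, subdiff g zb (lb + q) ->
  forall w, EE w (dotv lb w) -> dotv q w = 0.

Lemma e_perp lb i w : subdiff g zb lb -> FLAT lb -> act i -> EE w (dotv lb w) ->
  dotv (ee lb i) w = 0.
Proof.
move=> hl hF ai hw; have := hF _ (q_in_C hl ai) _ hw.
rewrite /qq; case: ifP => // bn; rewrite dotvZl => /eqP.
rewrite mulf_eq0 invr_eq0 oppr_eq0 (lt_eqF bn) /= => /eqP //.
Qed.

Lemma K_neg lb w : subdiff g zb lb -> FLAT lb -> EE w (dotv lb w) ->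
  EE (- w) (dotv lb (- w)).
Proof.
move=> hl hF hw; apply/K0E => i ai.
by rewrite dotvNr (e_perp hl hF ai hw) oppr0.
Qed.

Lemma ri_of_flat lb : subdiff g zb lb -> FLAT lb -> rel_int (subdiff g zb) lb.
Proof.
move=> hl hF.
pose es := [seq ee lb i | i <- enum 'I_k & act i].
have mem_es e : e \in es -> exists2 i, act i & e = ee lb i.
  by move=> /mapP [i]; rewrite mem_filter => /andP[ai _] ->; exists i.
have es_mem i : act i -> ee lb i \in es.
  by move=> ai; apply: map_f; rewrite mem_filter ai mem_enum.
have K0es w : (forall e, e \in es -> dotv e w <= 0) -> EE w (dotv lb w).
  by move=> h; apply/K0E => i ai; exact: h _ (es_mem i ai).
have sig0 u s : EE u s -> 0 <= s - dotv lb u.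
  by move=> hE; rewrite subr_ge0; apply: (proj1 (C_iff _) hl).
pose Bb := \sum_i `|b i|.
have Bb0 : 0 <= Bb by apply: sumr_ge0.
have bBb i : - b i <= Bb.
  apply: (le_trans (y := `|b i|)); first by rewrite -normrN ler_norm.
  by rewrite /Bb (bigD1 i) //= lerDl sumr_ge0.
have up u s i : EE u s -> act i -> dotv (ee lb i) u <= Bb * (s - dotv lb u).
  move=> hE ai; have := hE i ai; rewrite eeE => h.
  have : - b i * (s - dotv lb u) <= Bb * (s - dotv lb u).
    by apply: ler_wpM2r; [apply: sig0|apply: bBb].
  have -> : - b i * (s - dotv lb u) = - (b i * s) + b i * dotv lb u by ring.
  lra.
have low i : exists M, 0 <= M /\ forall u s, EE u s -> act i ->
    - dotv (ee lb i) u <= M * (s - dotv lb u).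
  case: (boolP (act i)) => ai; last by exists 0; split => // u s _ /negP.
  have : cone_mem es (- ee lb i).
    case: (farkas es (- ee lb i)) => // -[u0 [h1 h2]].
    by move: h2; rewrite dotvNl (e_perp hl hF ai (K0es _ h1)) oppr0 ltxx.
  move=> /cone_bound [M [M0 HM]]; exists (M * Bb); split; first by rewrite mulr_ge0.
  move=> u s hE _; rewrite -dotvNl -mulrA; apply: HM.
    by rewrite mulr_ge0 // sig0.
  by move=> e /mem_es [j aj ->]; apply: up.
have [Mf HMf] := choice low.
pose M := \sum_i Mf i + Bb.
have Mf0 i : 0 <= Mf i by case: (HMf i).
have M0 : 0 <= M by rewrite addr_ge0 // sumr_ge0.
have MfM i : Mf i <= M.
  by rewrite /M -[Mf i]addr0 lerD // (bigD1 i) //= lerDl sumr_ge0.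
have Hb u s : EE u s -> forall e, e \in es -> `|dotv e u| <= M * (s - dotv lb u).
  move=> hE e /mem_es [i ai ->].
  have [_ HMi] := HMf i.
  have s0 := sig0 u s hE.
  have h1 := HMi u s hE ai.
  have h2 := up u s i hE ai.
  have h3 : Mf i * (s - dotv lb u) <= M * (s - dotv lb u) by rewrite ler_wpM2r.
  have h4 : Bb * (s - dotv lb u) <= M * (s - dotv lb u).
    by rewrite ler_wpM2r // /M lerDr sumr_ge0.
  rewrite ler_norml; apply/andP; split; lra.
have [kap [kap0 Hkap]] := span_dot_bound es.
have span_C p : subdiff g zb p -> span_mem es (p - lb).
  move=> hp; case: (farkas es (p - lb)) => [/cone_span //|[u0 [h1 h2]]].
  have := hF (p - lb); rewrite addrC subrK => /(_ hp u0 (K0es _ h1)) e.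
  by rewrite e ltxx in h2.
split => //.
have r0 : 0 < 1 / (kap * M + 1) by rewrite divr_gt0 // ltr_pwDr // mulr_ge0.
apply/nbhs_normP; exists (1 / (kap * M + 1)) => //= w /= hw.
move=> [n [p [cc [hp [hc hw']]]]].
apply/C_iff => u s hE.
have hsp : span_mem es (w - lb).
  have -> : w - lb = \sum_(i < n) cc i *: (p i - lb).
    under eq_bigr do rewrite scalerBr.
    by rewrite sumrB -scaler_suml hc scale1r hw'.
  apply: big_ind => //; [exact: span0| exact: spanD | move=> i _; apply: spanZ; exact: span_C].
have h := Hkap (w - lb) u (M * (s - dotv lb u)) hsp (Hb u s hE).
have s0 := sig0 u s hE.
have hn : kap * M * `|w - lb| <= 1.
  rewrite distrC in hw.
  have : kap * M * `|w - lb| <= kap * M * (1 / (kap * M + 1)).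
    by rewrite ler_wpM2l ?mulr_ge0 // ltW.
  move=> h'; apply: (le_trans h'); rewrite mul1r ler_pdivrMr ?ltr_pwDr ?mulr_ge0 //.
  by rewrite mul1r lerDl.
have h5 : kap * `|w - lb| * (M * (s - dotv lb u)) <= s - dotv lb u.
  have -> : kap * `|w - lb| * (M * (s - dotv lb u)) =
            (kap * M * `|w - lb|) * (s - dotv lb u) by ring.
  by rewrite ler_piMl.
have -> : dotv w u = dotv lb u + dotv (w - lb) u by rewrite dotvBl addrC subrK.
lra.
Qed.



Lemma flat_of_sted lb : subdiff g zb lb -> strictly_twice_epi_diff g zb lb -> FLAT lb.
Proof.
move=> hl [_ [phi Hphi]] q hq w hw.
have hle : dotv q w <= 0.
  have := proj1 (C_iff _) hq _ _ hw; rewrite dotvDl; lra.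
apply/eqP; rewrite eq_le hle /=.
have [rho [rho0 HG]] := G2.
have h0u : `|(0:'rV[R]_m)| < rho by rewrite normr0.
have h0s : `|(0:R)| < rho by rewrite normr0.
have [t0 [t00 [h1 h2]]] := small_step w (dotv lb w) h0u h0s.
rewrite !add0r normrZ normrM gtr0_norm // in h1 h2.
pose tA n := t0 * harmonic n.
have tA0 n : 0 < tA n by rewrite mulr_gt0 // pl_harm_gt0.
have tAle n : tA n <= t0.
  rewrite /tA ler_piMr //; first exact: ltW.
  by rewrite /harmonic /= invf_le1 // ler1n.
have tAcvg : tA @ \oo --> 0.
  rewrite -(mulr0 t0); apply: cvgM; [exact: cvg_cst|exact: cvg_harmonic].
have epiA : epi phi (w, 0).
  have [_ Hout] := Hphi tA (fun _ => zb) (fun _ => lb) tA0 tAcvg (cvg_cst _)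
     (cvg_cst _) (fun _ => hl) (cvg_cst _).
  apply: (Hout (w, 0) id (fun _ => (w, 0))) => //; last exact: cvg_cst.
  move=> kk; rewrite /epi /=; apply/(sodq_le lb w 0 Hgz (tA0 kk)).
  rewrite mul0r mul0r addr0; apply: HG; last exact: EE_scale (ltW (tA0 kk)) hw.
    rewrite normrZ gtr0_norm //; apply: le_lt_trans h1.
    by rewrite ler_wpM2r.
  rewrite normrM gtr0_norm //; apply: le_lt_trans h2.
  by rewrite ler_wpM2r.
pose ep n : R := harmonic n.
have ep0 n : 0 < ep n by apply: harmonic_gt0.
have ep1 n : ep n <= 1 by rewrite /ep /harmonic /= invf_le1 // ler1n.
pose tB n := ep n ^+ 2.
have tB0 n : 0 < tB n by rewrite exprn_gt0.
have tBcvg : tB @ \oo --> 0.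
  rewrite -(mulr0 (0:R)) /tB; under eq_cvg do rewrite expr2.
  apply: cvgM; exact: cvg_harmonic.
pose vB n := lb + ep n *: q.
have vBcvg : vB @ \oo --> lb.
  rewrite -[X in _ --> X]addr0 -(scale0r q); apply: cvgD; first exact: cvg_cst.
  apply: cvgZ; [exact: cvg_harmonic|exact: cvg_cst].
have vBsub n : subdiff g zb (vB n).
  by apply: C_convex => //; rewrite ltW //= ep1.
have [Hin _] := Hphi tB (fun _ => zb) vB tB0 tBcvg (cvg_cst _)
     vBcvg vBsub (cvg_cst _).
have [yk [Hev Hy]] := Hin (w, 0) epiA.
have Hw := pl_cvg_seq_fst Hy; have Ha := pl_cvg_seq_snd Hy.
simpl in Hw, Ha.
have [gx [hgx Hsub]] := subdiffE hl.
move: hgx; rewrite Hgz => -[hgx]; rewrite -hgx in Hsub.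
apply: (@pl_lim_ge0 R (fun n => dotv q (yk n).1 + (yk n).2 * ep n / 2)).
  apply: filterS Hev => n; rewrite /epi /= => hn.
  have := (sodq_le (vB n) (yk n).1 (yk n).2 Hgz (tB0 n)).1 hn.
  have := Hsub (zb + tB n *: (yk n).1).
  rewrite addrAC subrr add0r dotvZr => h3 h4.
  have := le_trans h3 h4; rewrite lee_fin /vB dotvDl dotvZl => h5.
  have h6 : 0 <= ep n ^+ 3 * (dotv q (yk n).1 + (yk n).2 * ep n / 2).
    have -> : ep n ^+ 3 * (dotv q (yk n).1 + (yk n).2 * ep n / 2) =
      tB n * (ep n * dotv q (yk n).1) + (yk n).2 * tB n ^+ 2 / 2.
      by rewrite /tB; ring.
    move: h5; rewrite mulrDr; lra.
  by move: h6; rewrite pmulr_rge0 // exprn_gt0.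
have -> : dotv q w = dotv q w + 0 * 0 / 2 by rewrite mul0r mul0r addr0.
apply: cvgD; first exact: pl_dotv_cvg (cvg_cst _) Hw.
apply: cvgMr_tmp; apply: cvgM => //; exact: cvg_harmonic.
Qed.

Definition phiK lb (w : 'rV[R]_m) : \bar R := if `[< EE w (dotv lb w) >] then 0%E else +oo%E.

Lemma epi_phiK lb w (al : R) : epi (phiK lb) (w, al) <-> EE w (dotv lb w) /\ 0 <= al.
Proof.
rewrite /epi /phiK /=; case: asboolP => h.
  by rewrite lee_fin; split => [->|[]].
by split => // -[].
Qed.

Lemma sted_of_ri lb : subdiff g zb lb -> rel_int (subdiff g zb) lb ->
  exists delta, 0 < delta /\ forall x v, `|x - zb| < delta -> `|v - lb| < delta ->
    subdiff g x v -> strictly_twice_epi_diff g x v.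
Proof.
move=> hlb [_ /nbhs_normP [r1 r10 hri]].
have r1p : 0 < r1 := r10.
have refl v : subdiff g zb v -> `|v - lb| < r1 / 2 ->
    subdiff g zb (2 *: v - lb) /\ subdiff g zb (2 *: lb - v).
  move=> hv hvl; split; apply: hri.
  - rewrite /= (_ : lb - (2 *: v - lb) = 2 *: (lb - v)); last by apply/rowP => ?; rewrite !mxE; ring.
    rewrite normrZ distrC ger0_norm //; lra.
  - have -> : 2 *: v - lb = 2 *: v + (1 - 2) *: lb by apply/rowP => ?; rewrite !mxE; ring.
    exact: pl_aff2.
  - rewrite /= (_ : lb - (2 *: lb - v) = v - lb); last by apply/rowP => ?; rewrite !mxE; ring.
    lra.
  - have -> : 2 *: lb - v = 2 *: lb + (1 - 2) *: v by apply/rowP => ?; rewrite !mxE; ring.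
    exact: pl_aff2.
have [rho [rho0 HG]] := G2.
pose M0 := m%:R * (`|lb| + 1) + 1.
have M01 : 1 <= M0 by rewrite /M0 lerDr mulr_ge0 // addr_ge0.
have M0p : 0 < M0 by apply: lt_le_trans M01.
pose del := Num.min (Num.min 1 (r1 / 2)) (rho / (2 * M0)).
have del0 : 0 < del by rewrite !lt_min ltr01 !divr_gt0 // mulr_gt0.
have del1 : del <= 1 by rewrite !ge_min lexx.
have del2 : del <= r1 / 2 by rewrite !ge_min lexx !orbT.
have del3 : del * M0 <= rho / 2.
  have h : del <= rho / (2 * M0) by rewrite ge_min lexx orbT.
  have -> : rho / 2 = rho / (2 * M0) * M0.
    by field; rewrite gt_eqF.
  by rewrite ler_wpM2r // ltW.
have del4 : del <= rho / 2.
  by apply: le_trans del3; rewrite ler_peMr // ltW.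
exists del; split => //.
have F2 v w : subdiff g zb v -> `|v - lb| < r1 / 2 -> EE w (dotv lb w) ->
    dotv v w = dotv lb w.
  move=> hv hvl hw; have [_ h2] := refl v hv hvl.
  have e1 := proj1 (C_iff _) hv _ _ hw.
  have e2 := proj1 (C_iff _) h2 _ _ hw.
  move: e2; rewrite dotvBl dotvZl => e2; apply/eqP; rewrite eq_le e1 /=; lra.
have F3 : FLAT lb.
  move=> q hq w hw.
  pose t := Num.min 1 (r1 / 2 / (`|q| + 1)).
  have q1 : 0 < `|q| + 1 by rewrite ltr_pwDr.
  have t0 : 0 < t by rewrite lt_min ltr01 !divr_gt0.
  have t1 : t <= 1 by rewrite ge_min lexx.
  have htq : `|t *: q| < r1 / 2.
    rewrite normrZ gtr0_norm //.
    have : t * `|q| <= r1 / 2 / (`|q| + 1) * `|q|.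
      by apply: ler_wpM2r => //; rewrite ge_min lexx orbT.
    move=> h; apply: le_lt_trans h _.
    by rewrite mulrAC ltr_pdivrMr // ltr_pM2l ?divr_gt0 // ltrDl.
  have hc := @C_convex lb q t hlb hq (introT andP (conj (ltW t0) t1)).
  have := F2 _ w hc _ hw; rewrite [lb + _]addrC addrK => /(_ htq).
  rewrite dotvDl dotvZl => e.
  have : t * dotv q w = 0 by lra.
  by move/eqP; rewrite mulf_eq0 gt_eqF //= => /eqP.
have F5 u w tau : EE u (dotv lb u) -> EE (u + w) (dotv lb u + tau) -> EE w tau.
  move=> hu huw; have := EE_add huw (K_neg hlb F3 hu).
  rewrite dotvNr (_ : u + w + - u = w); last by rewrite addrC addKr.
  by rewrite (_ : dotv lb u + tau + - dotv lb u = tau) //; ring.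
have [gz [hgz Hz]] := subdiffE hlb.
move: hgz; rewrite Hgz => -[hgz]; rewrite -hgz in Hz.
have F1 x v : `|x - zb| < del -> `|v - lb| < del -> subdiff g x v ->
   [/\ g x = (gam + dotv lb (x - zb))%:E, subdiff g zb v,
       EE (x - zb) (dotv lb (x - zb)) & dotv v (x - zb) = dotv lb (x - zb)].
  move=> hx hv hs.
  have [gx [hgx Hx]] := subdiffE hs.
  have lo : dotv lb (x - zb) <= gx - gam.
    by have := Hz x; rewrite hgx lee_fin; lra.
  have hi : gx - gam <= dotv v (x - zb).
    have := Hx zb; rewrite Hgz lee_fin -opprB dotvNr; lra.
  have b1 : `|dotv lb (x - zb)| < rho.
    apply: (le_lt_trans (dotv_norm _ _)).
    have : m%:R * `|lb| * `|x - zb| <= M0 * del.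
      apply: ler_pM; rewrite ?mulr_ge0 //; last exact: ltW.
      by rewrite /M0 ler_wpDr // ler_wpM2l // lerDl.
    move: del3; rewrite mulrC; lra.
  have b2 : `|dotv v (x - zb)| < rho.
    apply: (le_lt_trans (dotv_norm _ _)).
    have hvn : `|v| <= `|lb| + 1.
      have -> : v = lb + (v - lb) by rewrite addrC subrK.
      apply: (le_trans (ler_normD _ _)); rewrite lerD2l; lra.
    have : m%:R * `|v| * `|x - zb| <= M0 * del.
      apply: ler_pM; rewrite ?mulr_ge0 //; last exact: ltW.
      by rewrite /M0 ler_wpDr // ler_wpM2l.
    move: del3; rewrite mulrC; lra.
  have hss : `|gx - gam| < rho.
    rewrite ltr_norml; apply/andP; split.
      by apply: lt_le_trans lo; move: b1; rewrite ltr_norml => /andP[].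
    by apply: le_lt_trans hi _; move: b2; rewrite ltr_norml => /andP[].
  have hus : `|x - zb| < rho by apply: lt_le_trans hx _; apply: le_trans del4 _; lra.
  have hE : EE (x - zb) (gx - gam).
    by apply: G1; rewrite [zb + _]addrC subrK [gam + _]addrC subrK hgx.
  have hvC : subdiff g zb v.
    apply/C_iff => w tau hw.
    have [t [t0 [h1 h2]]] := small_step w tau hus hss.
    have := HG _ _ h1 h2 (EE_add hE (EE_scale (ltW t0) hw)).
    rewrite (_ : zb + (x - zb + t *: w) = x + t *: w); last by rewrite addrA [zb + _]addrC subrK.
    have := Hx (x + t *: w); rewrite addrAC subrr add0r dotvZr => h3 h4.
    have := le_trans h3 h4; rewrite lee_fin.
    rewrite (_ : gam + (gx - gam + t * tau) = gx + t * tau); last by ring.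
    by rewrite lerD2l ler_pM2l.
  have e1 := proj1 (C_iff _) hvC _ _ hE.
  have [h2v _] := refl v hvC (lt_le_trans hv del2).
  have e2 := proj1 (C_iff _) h2v _ _ hE.
  move: e2; rewrite dotvBl dotvZl => e2.
  have eq1 : gx - gam = dotv lb (x - zb) by lra.
  split => //.
  - by rewrite hgx -eq1 addrC subrK.
  - by rewrite -eq1.
  - lra.
move=> x v hx hv hs; split => //.
exists (phiK lb) => tS xS vS tS0 tScvg xScvg vScvg hsub _.
have [_ hvC _ _] := F1 x v hx hv hs.
have evx := pl_near_ball xScvg hx.
have evv := pl_near_ball vScvg hv.
split.
- move=> [w al] /epi_phiK [hw al0].
  exists (fun _ => (w, al)); split; last exact: cvg_cst.
  have den : 0 < `|w| + `|dotv lb w| + 1 by rewrite ltr_pwDr // addr_ge0.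
  pose eta := rho / 2 / (`|w| + `|dotv lb w| + 1).
  have eta0 : 0 < eta by rewrite !divr_gt0.
  have evt := pl_near_small tScvg eta0.
  apply: filterS (filterI (filterI evx evv) evt) => n [[hxn hvn] htn].
  have [hgX hVC hEU hVU] := F1 _ _ hxn hvn (hsub n).
  rewrite /epi /=; apply/(sodq_le (vS n) w al hgX (tS0 n)).
  have e3 : dotv (vS n) w = dotv lb w := F2 _ _ hVC (lt_le_trans hvn del2) hw.
  have tn : 0 < tS n := tS0 n.
  have hT : tS n * (`|w| + `|dotv lb w| + 1) < rho / 2.
    move: htn; rewrite gtr0_norm // /eta ltr_pdivlMr //.
  have hT1 : tS n * `|w| <= tS n * (`|w| + `|dotv lb w| + 1).
    by apply: ler_wpM2l; [exact: ltW | rewrite -addrA lerDl addr_ge0].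
  have hT2 : tS n * `|dotv lb w| <= tS n * (`|w| + `|dotv lb w| + 1).
    by apply: ler_wpM2l; [exact: ltW | rewrite addrAC lerDr addr_ge0].
  have hU1 : `|dotv lb (xS n - zb)| <= rho / 2.
    apply: (le_trans (dotv_norm _ _)); apply: le_trans del3.
    rewrite mulrC; apply: ler_pM; rewrite ?mulr_ge0 //; first exact: ltW.
    by rewrite /M0 ler_wpDr // ler_wpM2l // lerDl.
  have hG := HG (xS n - zb + tS n *: w) (dotv lb (xS n - zb) + tS n * dotv lb w).
  have := hG _ _ (EE_add hEU (EE_scale (ltW tn) hw)).
  rewrite (_ : zb + (xS n - zb + tS n *: w) = xS n + tS n *: w); last first.
    by rewrite addrA [zb + _]addrC subrK.
  move=> H; apply: le_trans (H _ _) _.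
  + apply: (le_lt_trans (ler_normD _ _)); rewrite normrZ gtr0_norm //.
    have : `|xS n - zb| < rho / 2 by apply: lt_le_trans hxn del4.
    lra.
  + apply: (le_lt_trans (ler_normD _ _)); rewrite normrM gtr0_norm //.
    lra.
  rewrite lee_fin e3 addrA lerDl.
  by rewrite mulr_ge0 // mulr_ge0 // exprn_ge0 // ltW.
- move=> [w al] sq yk hsq hyk hy.
  have xS' := pl_cvg_subseq hsq xScvg.
  have vS' := pl_cvg_subseq hsq vScvg.
  have tS' := pl_cvg_subseq hsq tScvg.
  have Hw := pl_cvg_seq_fst hy; have Ha := pl_cvg_seq_snd hy.
  simpl in Hw, Ha.
  have al0 : 0 <= al.
    apply: (@pl_lim_ge0 R (fun n => (yk n).2)) => //; apply: filterE => n.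
    have [gX [hgX HX]] := subdiffE (hsub (sq n)).
    have := (sodq_le (vS (sq n)) (yk n).1 (yk n).2 hgX (tS0 (sq n))).1 (hyk n).
    have := HX (xS (sq n) + tS (sq n) *: (yk n).1).
    rewrite addrAC subrr add0r dotvZr => h1 h2.
    have := le_trans h1 h2; rewrite lee_fin => h3.
    have h4 : 0 <= (yk n).2 * (tS (sq n) ^+ 2 / 2) by rewrite mulrA; lra.
    by move: h4; rewrite pmulr_lge0 // divr_gt0 // exprn_gt0.
  have hEv : EE w (dotv v w).
    move=> i ai.
    apply: (@pl_lim_le0 R (fun n => dotv (a i) (yk n).1 + b i *
       (dotv (vS (sq n)) (yk n).1 + (yk n).2 * tS (sq n) / 2))).
      have evx' := pl_near_ball xS' hx; have evv' := pl_near_ball vS' hv.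
      apply: filterS (filterI evx' evv') => n [hxn hvn].
      have [hgX hVC hEU hVU] := F1 _ _ hxn hvn (hsub (sq n)).
      have := (sodq_le (vS (sq n)) (yk n).1 (yk n).2 hgX (tS0 (sq n))).1 (hyk n).
      rewrite (_ : xS (sq n) + tS (sq n) *: (yk n).1 =
         zb + ((xS (sq n) - zb) + tS (sq n) *: (yk n).1)); last first.
        by rewrite addrA [zb + _]addrC subrK.
      rewrite -!addrA => /G1 hE1.
      rewrite [X in EE X _]addrA in hE1.
      have hE2 := F5 _ _ _ hEU hE1.
      have : EE (tS (sq n) *: (yk n).1)
         (tS (sq n) * (dotv (vS (sq n)) (yk n).1 + (yk n).2 * tS (sq n) / 2)).
        by move: hE2; congr EE; ring.
      by move/EE_unscale => /(_ (tS0 _)) /(_ i ai).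
    have -> : dotv (a i) w + b i * dotv v w =
      dotv (a i) w + b i * (dotv v w + al * 0 / 2) by rewrite mulr0 mul0r addr0.
    apply: cvgD; first exact: pl_dotv_cvg (cvg_cst _) Hw.
    apply: cvgM; first exact: cvg_cst.
    apply: cvgD; first exact: pl_dotv_cvg vS' Hw.
    apply: cvgMr_tmp; exact: cvgM.
  apply/epi_phiK; split => //.
  have e1 := proj1 (C_iff _) hlb _ _ hEv.
  have [h2v _] := refl v hvC (lt_le_trans hv del2).
  have e2 := proj1 (C_iff _) h2v _ _ hEv.
  move: e2; rewrite dotvBl dotvZl => e2.
  have -> : dotv lb w = dotv v w by lra.
  exact: hEv.
Qed.


End Local.



Unset Implicit Arguments. Set Strict Implicit.

Theorem theorem4p3 (R : realType) (m : nat) (g : 'rV[R]_m -> \bar R)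
    (zbar lbar : 'rV[R]_m) :
  polyhedral g -> subdiff g zbar lbar ->
  ((\forall p \near (zbar, lbar),
       subdiff g p.1 p.2 -> strictly_twice_epi_diff g p.1 p.2)
   <-> rel_int (subdiff g zbar) lbar).
Proof.
move=> [[Hnm _] [k [a [b [c Heq]]]]] hl.
have HQ : forall x (al : R), (g x <= al%:E)%E <->
    (forall i, dotv (a i) x + b i * al <= c i).
  by move=> x al; have := congr1 (fun S => S (x, al)) Heq; rewrite /epi /= => ->.
have [gam [Hgz _]] := subdiffE hl.
split.
  move=> Hn; have := nbhs_singleton Hn => /= /(_ hl) hst.
  apply: (ri_of_flat HQ Hnm Hgz hl).
  exact: (flat_of_sted HQ Hnm Hgz hl hst).
move=> hri; have [del [del0 H]] := sted_of_ri HQ Hnm Hgz hl hri.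
have n1 : nbhs zbar [set x | `|x - zbar| < del].
  by apply/(@nbhs_normP R 'rV[R]_m); exists del => // y /=; rewrite distrC.
have n2 : nbhs lbar [set x | `|x - lbar| < del].
  by apply/(@nbhs_normP R 'rV[R]_m); exists del => // y /=; rewrite distrC.
exists ([set x | `|x - zbar| < del], [set v | `|v - lbar| < del]); first by split.
move=> [x v] [/= hx hv]; exact: H.
Qed.
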